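(* Let the target $m$ and surrogate $\tilde m$ be binary classifiers on $[0,1]^d$ that are locally Lipschitz continuous with constants $\gamma_m$ and $\gamma_{\tilde m}$ respectively (not necessarily ReLU), such that $m(\boldsymbol{w})=\tilde m(\boldsymbol{w})$ for every counterfactual $\boldsymbol{w}$. Assume the counterfactuals form a $\delta$-cover of the decision boundary of $m$. Then $|\tilde m(\boldsymbol{x})-m(\boldsymbol{x})|\le(\gamma_m+\gamma_{\tilde m})\,\delta$ for every $\boldsymbol{x}$ on the decision boundary of $m$.
   Context: A binary classifier $m:[0,1]^d\to[0,1]$ has predicted class $\mathds{1}[m(\boldsymbol{x})\ge0.5]$ and decision boundary $\{\boldsymbol{x}:m(\boldsymbol{x})=0.5\}$. A model $m$ is locally Lipschitz continuous (with constant $\gamma\ge0$) if for every $\boldsymbol{x}_1\in[0,1]^d$ there is a neighborhood $\mathbb{B}_{\boldsymbol{x}_1}\subseteq[0,1]^d$ of $\boldsymbol{x}_1$ such that $|m(\boldsymbol{x}_1)-m(\boldsymbol{x}_2)|\le\gamma\|\boldsymbol{x}_1-\boldsymbol{x}_2\|_2$ for all $\boldsymbol{x}_2\in\mathbb{B}_{\boldsymbol{x}_1}$. Counterfactuals are points returned by a counterfactual generator for queries (points of the favorable region obtained from queries in the unfavorable region). The counterfactuals form a $\delta$-cover of the decision boundary if every point $\boldsymbol{x}$ of the decision boundary of $m$ has a counterfactual $\boldsymbol{w}$ with $\|\boldsymbol{x}-\boldsymbol{w}\|_2\le\delta$. *)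

(* Defs.v *)
From mathcomp Require Import all_boot all_order all_algebra.
From mathcomp Require Import reals.
Set Implicit Arguments. Unset Strict Implicit. Unset Printing Implicit Defensive.
Import Order.TTheory GRing.Theory Num.Theory.
Local Open Scope ring_scope.

Definition norm2 {R : realType} {d : nat} (x : 'rV[R]_d) : R :=
  Num.sqrt (\sum_(i < d) (x ord0 i) ^+ 2).

Definition in_cube {R : realType} {d : nat} (x : 'rV[R]_d) : Prop :=
  forall i : 'I_d, 0 <= x ord0 i <= 1.

Definition classifier {R : realType} {d : nat} (m : 'rV[R]_d -> R) : Prop :=
  forall x, in_cube x -> 0 <= m x <= 1.

Definition on_boundary {R : realType} {d : nat} (m : 'rV[R]_d -> R)
  (x : 'rV[R]_d) : Prop := in_cube x /\ m x = 2^-1.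

Definition locally_lipschitz {R : realType} {d : nat} (m : 'rV[R]_d -> R)
  (gamma : R) : Prop :=
  0 <= gamma /\
  forall x1, in_cube x1 -> exists2 r : R, 0 < r &
    forall x2, in_cube x2 -> norm2 (x1 - x2) < r ->
      `|m x1 - m x2| <= gamma * norm2 (x1 - x2).

Definition delta_cover {R : realType} {d : nat} (m : 'rV[R]_d -> R)
  (C : 'rV[R]_d -> Prop) (delta : R) : Prop :=
  forall x, on_boundary m x -> exists2 w, C w & norm2 (x - w) <= delta.

(* Main.v *)
Require Import Defs.
From mathcomp Require Import all_boot all_order all_algebra.
From mathcomp Require Import reals.
From mathcomp Require Import classical_sets lra.
Import Order.TTheory GRing.Theory Num.Theory.
Local Open Scope ring_scope.
Section Aux.
Local Open Scope classical_set_scope.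

Lemma lip1 (R : realType) (g : R -> R) (K : R) :
  0 <= K ->
  (forall T, 0 <= T <= 1 -> exists2 r : R, 0 < r &
     forall s, 0 <= s <= 1 -> `|T - s| < r -> `|g T - g s| <= K * `|T - s|) ->
  `|g 0 - g 1| <= K.
Proof.
move=> K0 loc.
pose A := [set t : R | (0 <= t <= 1) /\ forall s, 0 <= s <= t -> `|g 0 - g s| <= K * s].
have A0 : A 0.
  split; first by rewrite lexx ler01.
  move=> s /andP[s0 s0']; have -> : s = 0 by apply/eqP; rewrite eq_le s0 s0'.
  by rewrite subrr normr0 mulr0.
have hs : has_sup A.
  split; first by exists 0.
  by exists 1 => t [/andP[_ ->]].
set T := sup A.
have supT : sup A = T by [].
have T0 : 0 <= T by exact: sup_upper_bound.
have T1 : T <= 1.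
  apply: ge_sup; first by exists 0.
  by move=> t [/andP[_ ->]].
clearbody T.
have [r r0 Hr] := loc T (ltac:(by rewrite T0 T1) : 0 <= T <= 1).
have claim : forall s : R, 0 <= s <= 1 -> s < T + r -> `|g 0 - g s| <= K * s.
  move=> s /andP[s0 s1] sTr.
  have [sT|Ts] := ltP s T.
    have [t [_ Ht] st] := sup_adherent (ltac:(by rewrite subr_gt0) : 0 < T - s) hs.
    apply: Ht; rewrite s0 /=; move: st; rewrite supT; lra.
  have [t At tT] := sup_adherent r0 hs.
  have tleT : t <= T by rewrite -supT; exact: (sup_upper_bound hs At).
  case: At => /andP[t0 t1] Ht.
  have h1 := Ht t (ltac:(by rewrite t0 lexx) : 0 <= t <= t).
  have h2 : `|g T - g t| <= K * `|T - t|.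
    by apply: Hr; [rewrite t0 t1 | rewrite ger0_norm ?subr_ge0 //; move: tT; rewrite supT; lra].
  have h3 : `|g T - g s| <= K * `|T - s|.
    by apply: Hr; [rewrite s0 s1 | rewrite ler0_norm ?subr_le0 //; lra].
  rewrite (ger0_norm (_ : 0 <= T - t)) ?subr_ge0 // in h2.
  rewrite (ler0_norm (_ : T - s <= 0)) ?subr_le0 // in h3.
  rewrite (distrC (g T)) in h2.
  have := ler_normD (g 0 - g t) (g t - g s).
  have := ler_normD (g t - g T) (g T - g s).
  rewrite !subrKA.
  lra.
have T1' : T = 1.
  apply/eqP; rewrite eq_le T1 /=; rewrite leNgt; apply/negP => T1s.
  pose t' := Num.min 1 (T + r / 2).
  have h1 : T < t' by rewrite /t' lt_min T1s /=; lra.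
  have h2 : t' <= 1 by rewrite /t' ge_min lexx.
  have h3 : t' < T + r by rewrite /t' gt_min; apply/orP; right; lra.
  have t'A : A t'.
    split; first by apply/andP; split => //; lra.
    move=> s /andP[s0 st']; apply: claim; [apply/andP; split|]; lra.
  have := sup_upper_bound hs t'A; rewrite supT; lra.
have := claim 1 (ltac:(by rewrite ler01 lexx)) (ltac:(rewrite T1'; lra)).
by rewrite mulr1.
Qed.
End Aux.

Lemma norm2_scale (R : realType) d (c : R) (v : 'rV[R]_d) :
  norm2 (c *: v) = `|c| * norm2 v.
Proof.
rewrite /norm2 -sqrtr_sqr -sqrtrM ?sqr_ge0 // mulr_sumr; congr Num.sqrt.
by apply: eq_bigr => i _; rewrite mxE exprMn.
Qed.

Lemma norm2_ge0 (R : realType) d (v : 'rV[R]_d) : 0 <= norm2 v.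
Proof. exact: sqrtr_ge0. Qed.

Lemma lip_global (R : realType) d (f : 'rV[R]_d -> R) g :
  locally_lipschitz f g -> forall x w, in_cube x -> in_cube w ->
  `|f x - f w| <= g * norm2 (x - w).
Proof.
move=> [g0 loc] x w cx cw.
set L := norm2 (x - w).
have L0 : 0 <= L by exact: norm2_ge0.
have [Le|Lp] := eqVneq L 0.
  have [r r0 Hr] := loc x cx.
  by apply: Hr => //; rewrite -/L Le.
have Lpos : 0 < L by rewrite lt_def Lp L0.
pose p (s : R) := x + s *: (w - x).
have cp : forall s, 0 <= s <= 1 -> in_cube (p s).
  move=> s /andP[s0 s1] i; rewrite !mxE.
  have := cx i; have := cw i; move=> /andP[? ?] /andP[? ?].
  apply/andP; split; nra.
have dp : forall T s, norm2 (p T - p s) = `|T - s| * L.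
  move=> T s.
  have -> : p T - p s = (T - s) *: (w - x).
    by rewrite /p scalerBl opprD addrACA subrr add0r.
  rewrite norm2_scale; congr (_ * _).
  by rewrite /L -opprB -scaleN1r norm2_scale normrN normr1 mul1r.
have := @lip1 R (fun s => f (p s)) (g * L) (mulr_ge0 g0 L0).
have p0 : p 0 = x by rewrite /p scale0r addr0.
have p1 : p 1 = w by rewrite /p scale1r addrC subrK.
rewrite p0 p1; apply.
move=> T hT; have [r r0 Hr] := loc (p T) (cp T hT).
exists (r / L); first by rewrite divr_gt0.
move=> s hs sT; rewrite -mulrA (mulrC L) -dp; apply: Hr; first exact: cp.
by rewrite dp -ltr_pdivlMr.
Qed.

Theorem corollary2 (R : realType) (d : nat)
  (m mt : 'rV[R]_d -> R) (gm gmt delta : R) (C : 'rV[R]_d -> Prop) :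
  classifier m -> classifier mt ->
  locally_lipschitz m gm -> locally_lipschitz mt gmt ->
  (* counterfactuals are points of the favourable region of [0,1]^d *)
  (forall w, C w -> in_cube w /\ 2^-1 <= m w) ->
  (forall w, C w -> m w = mt w) ->
  delta_cover m C delta ->
  forall x, on_boundary m x -> `|mt x - m x| <= (gm + gmt) * delta.
Proof.
move=> _ _ lm lmt hC eqC cov x bx.
have [w Cw dw] := cov x bx.
have [cw _] := hC w Cw.
have cx := bx.1.
have h1 := @lip_global _ _ _ _ lm _ _ cx cw.
have h2 := @lip_global _ _ _ _ lmt _ _ cx cw.
have gm0 := lm.1; have gmt0 := lmt.1.
rewrite -(eqC w Cw) in h2 *.
have e : mt x - m x = (mt x - m w) + (m w - m x) by rewrite addrA subrK.
rewrite e; apply: (le_trans (ler_normD _ _)); rewrite (distrC (m w)).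
have := ler_wpM2l gm0 dw; have := ler_wpM2l gmt0 dw.
rewrite mulrDl; lra.
Qed.
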